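(* Let $K\ge 2$, and let $\mathbf{z}_r$ and $\mathrm{OPT}\text{-}\mathbf{Q}^\star$ be as defined in the context. Let $\lambda_j^\star$ be the $j$-th eigenvalue of $\mathbf{Q}^\star$, with $\lambda_j^\star=0$ if $j>r^\star$, and define $\delta^\star=\min\{\min_{j\in[r-1]}|\lambda_j^\star-\lambda_{j+1}^\star|,\ \lambda_r^\star\}$. If $r\le r^\star$ and $\|\mathbf{H}\|_2\le\delta^\star/2$, then $$\left|\mathrm{OPT}\text{-}\mathbf{Q}^\star-\mathbf{z}_r^\dagger\mathbf{Q}^\star\mathbf{z}_r\right|\le O\!\left(n\left(\lambda_{r+1}^\star+\frac{\lambda_1^\star}{\delta^\star}\|\mathbf{H}\|_2\right)\right).$$
   Context: $\mathcal{A}_K=\{\exp(2\pi\mathrm{i}k/K):k=0,\dots,K-1\}$. $\mathbf{Q}^\star\in\mathbb{C}^{n\times n}$ is Hermitian positive semi-definite of rank $r^\star$, with eigendecomposition $\mathbf{Q}^\star=\sum_{i=1}^{r^\star}\lambda_i^\star\mathbf{u}_i^\star\mathbf{u}_i^{\star\dagger}$, $\lambda_1^\star\ge\lambda_2^\star\ge\dots$. $\mathbf{H}\in\mathbb{C}^{n\times n}$ is an arbitrary (not necessarily Hermitian) matrix and $\mathbf{Q}=\mathbf{Q}^\star+\mathbf{H}$. $\mathbf{Q}_r=\mathbf{V}_r\boldsymbol{\Sigma}_r\mathbf{V}_r^\dagger$, where $\boldsymbol{\Sigma}_r$ is the diagonal matrix of the top-$r$ singular values of $\mathbf{Q}$ and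 $\mathbf{V}_r$ the matrix of the corresponding top-$r$ left singular vectors. $\mathrm{OPT}\text{-}\mathbf{Q}^\star=\max_{\mathbf{z}\in\mathcal{A}_K^n}\mathbf{z}^\dagger\mathbf{Q}^\star\mathbf{z}$ and $\mathbf{z}_r$ attains $\max_{\mathbf{z}\in\mathcal{A}_K^n}\mathbf{z}^\dagger\mathbf{Q}_r\mathbf{z}$. $\|\cdot\|_2$ is the spectral norm; $O(\cdot)$ hides an absolute constant. *)

(* Defs.v *)
From HB Require Import structures.
From mathcomp Require Import all_boot all_order all_algebra.
From mathcomp Require Import all_classical all_reals all_analysis.
From mathcomp Require Import complex.
Set Implicit Arguments. Unset Strict Implicit. Unset Printing Implicit Defensive.
Import Order.TTheory GRing.Theory Num.Theory.
Local Open Scope ring_scope.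
Local Open Scope classical_set_scope.

Section Defs.
Variable R : realType.

Definition adj (m n : nat) (A : 'M[R[i]]_(m, n)) : 'M[R[i]]_(n, m) :=
  (map_mx (@Num.conj R[i]) A)^T.

Definition vnorm (n : nat) (x : 'cV[R[i]]_n) : R :=
  Num.sqrt (\sum_(i < n) (complex.Re (x i 0) ^+ 2 + complex.Im (x i 0) ^+ 2)).

Definition specnorm (n : nat) (A : 'M[R[i]]_n) : R :=
  sup [set vnorm (A *m x) | x in [set x : 'cV[R[i]]_n | vnorm x = 1]].

Definition expi (t : R) : R[i] := Complex (cos t) (sin t).

Definition A_K (K : nat) : set R[i] :=
  [set expi (2 * pi * k%:R / K%:R) | k in [set k : nat | (k < K)%N]].

Definition inAKn (K n : nat) (z : 'cV[R[i]]_n) : Prop := forall i, A_K K (z i 0).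

Definition qform (n : nat) (A : 'M[R[i]]_n) (z : 'cV[R[i]]_n) : R[i] :=
  (adj z *m A *m z) 0 0.

(* delta* = min( min_{j in [r-1]} |lam_j - lam_{j+1}|, lam_r )  (1-indexed lam) *)
Definition delta (lam : nat -> R) (r : nat) : R :=
  foldr Num.min (lam r) [seq `|lam j - lam j.+1| | j <- iota 1 (r - 1)].

End Defs.

(* Main.v *)
Require Import Defs.
From HB Require Import structures.
From mathcomp Require Import all_boot all_order all_algebra.
From mathcomp Require Import all_classical all_reals all_analysis.
From mathcomp Require Import complex.
From mathcomp Require Import ring lra zify.
Import Order.TTheory GRing.Theory Num.Theory.
Local Open Scope ring_scope.

Module Aux.
Set Implicit Arguments. Unset Strict Implicit. Unset Printing Implicit Defensive.

Section Basic.
Variable R : realType.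
Local Notation C := R[i].

Definition cn2 (c : C) : R := complex.Re c ^+ 2 + complex.Im c ^+ 2.
Lemma conjE (a b : R) : Num.conj (a +i* b)%C = (a -i* b)%C.
Proof. reflexivity. Qed.
Lemma cn2E (c : C) : Num.conj c * c = (cn2 c)%:C%C.
Proof. case: c => a b. rewrite conjE /cn2 /=. apply/eqP; rewrite eq_complex /=. apply/andP; split; apply/eqP; ring. Qed.
Lemma cjM (a b : C) : Num.conj (a * b) = Num.conj a * Num.conj b.
Proof. case: a => a1 a2; case: b => b1 b2. apply/eqP; rewrite eq_complex /=. apply/andP; split; apply/eqP; ring. Qed.
Lemma cjD (a b : C) : Num.conj (a + b) = Num.conj a + Num.conj b.
Proof. case: a => a1 a2; case: b => b1 b2. apply/eqP; rewrite eq_complex /=. apply/andP; split; apply/eqP; ring. Qed.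
Lemma cjN (a : C) : Num.conj (- a) = - Num.conj a.
Proof. case: a => a1 a2. apply/eqP; rewrite eq_complex /=. apply/andP; split; apply/eqP; ring. Qed.
Lemma cj0 : Num.conj (0 : C) = 0.
Proof. apply/eqP; rewrite eq_complex /= oppr0 !eqxx //. Qed.
Lemma cjK (a : C) : Num.conj (Num.conj a) = a.
Proof. case: a => a1 a2. apply/eqP; rewrite eq_complex /=. apply/andP; split; apply/eqP; ring. Qed.
Lemma cj_sum (I : Type) (s : seq I) (P : pred I) (F : I -> C) :
  Num.conj (\sum_(i <- s | P i) F i) = \sum_(i <- s | P i) Num.conj (F i).
Proof. exact: (big_morph _ cjD cj0). Qed.
Lemma cn2_ge0 c : 0 <= cn2 c.
Proof. rewrite /cn2; apply: addr_ge0; apply: sqr_ge0. Qed.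
Lemma ReD (a b : C) : complex.Re (a + b) = complex.Re a + complex.Re b.
Proof. by case: a; case: b. Qed.
Lemma ReN (a : C) : complex.Re (- a) = - complex.Re a.
Proof. by case: a. Qed.
Lemma ReB (a b : C) : complex.Re (a - b) = complex.Re a - complex.Re b.
Proof. by rewrite ReD ReN. Qed.
Lemma Re0 : complex.Re (0 : C) = 0. Proof. by []. Qed.
Lemma Re_sum (I : Type) (s : seq I) (P : pred I) (F : I -> C) :
  complex.Re (\sum_(i <- s | P i) F i) = \sum_(i <- s | P i) complex.Re (F i).
Proof. exact: (big_morph _ ReD Re0). Qed.
Lemma ReC (a : C) : complex.Re (Num.conj a) = complex.Re a.
Proof. by case: a. Qed.
Lemma Rereal (a : R) : complex.Re (a%:C)%C = a. Proof. by []. Qed.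
Lemma ReMr (a : R) (b : C) : complex.Re ((a%:C)%C * b) = a * complex.Re b.
Proof. case: b => x y /=. ring. Qed.
Lemma conj_real (a : R) : Num.conj (a%:C)%C = (a%:C)%C.
Proof. apply/eqP; rewrite eq_complex /= oppr0 !eqxx //. Qed.
Lemma cn2_real (a : R) : cn2 (a%:C)%C = a ^+ 2.
Proof. rewrite /cn2 /=. ring. Qed.
Lemma cn2M (a b : C) : cn2 (a * b) = cn2 a * cn2 b.
Proof. case: a => a1 a2; case: b => b1 b2; rewrite /cn2 /=. ring. Qed.
Lemma cn2C (a : C) : cn2 (Num.conj a) = cn2 a.
Proof. case: a => a1 a2; rewrite /cn2 /=. ring. Qed.
Lemma ReMC (a b : C) : 2 * complex.Re (Num.conj a * b) <= cn2 a + cn2 b.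
Proof. case: a => a1 a2; case: b => b1 b2; rewrite /cn2 /=.
have h1 := sqr_ge0 (a1 - b1). have h2 := sqr_ge0 (a2 - b2). nra. Qed.

Variable n : nat.
Implicit Types x y z : 'cV[C]_n.

Definition dot x y : C := \sum_k Num.conj (x k 0) * y k 0.
Definition nsq x : R := complex.Re (dot x x).
Definition N x : R := Num.sqrt (nsq x).

Lemma dotDr x y z : dot x (y + z) = dot x y + dot x z.
Proof. rewrite /dot -big_split /=; apply: eq_bigr => k _; by rewrite mxE mulrDr. Qed.
Lemma dotZr x y a : dot x (a *: y) = a * dot x y.
Proof. rewrite /dot mulr_sumr; apply: eq_bigr => k _; rewrite mxE; ring. Qed.
Lemma dot0r x : dot x 0 = 0.
Proof. rewrite /dot big1 // => k _; by rewrite mxE mulr0. Qed.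
Lemma dotNr x y : dot x (- y) = - dot x y.
Proof. rewrite /dot -sumrN; apply: eq_bigr => k _; by rewrite mxE mulrN. Qed.
Lemma dotBr x y z : dot x (y - z) = dot x y - dot x z.
Proof. by rewrite dotDr dotNr. Qed.
Lemma dot_sumr x (I : Type) (s : seq I) (P : pred I) (F : I -> 'cV[C]_n) :
  dot x (\sum_(i <- s | P i) F i) = \sum_(i <- s | P i) dot x (F i).
Proof. exact: (big_morph _ (dotDr x) (dot0r x)). Qed.
Lemma dotC x y : dot y x = Num.conj (dot x y).
Proof. rewrite /dot cj_sum; apply: eq_bigr => k _; by rewrite cjM cjK mulrC. Qed.
Lemma dotDl x y z : dot (x + y) z = dot x z + dot y z.
Proof. by rewrite dotC dotDr cjD -!dotC. Qed.
Lemma dotZl x y a : dot (a *: x) y = Num.conj a * dot x y.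
Proof. by rewrite dotC dotZr cjM -dotC. Qed.
Lemma dot0l x : dot 0 x = 0.
Proof. by rewrite dotC dot0r cj0. Qed.
Lemma dotNl x y : dot (- x) y = - dot x y.
Proof. by rewrite dotC dotNr cjN -dotC. Qed.
Lemma dotBl x y z : dot (x - y) z = dot x z - dot y z.
Proof. by rewrite dotDl dotNl. Qed.
Lemma dot_suml y (I : Type) (s : seq I) (P : pred I) (F : I -> 'cV[C]_n) :
  dot (\sum_(i <- s | P i) F i) y = \sum_(i <- s | P i) dot (F i) y.
Proof. exact: (big_morph _ (fun a b => dotDl a b y) (dot0l y)). Qed.
Lemma Redot_sym x y : complex.Re (dot y x) = complex.Re (dot x y).
Proof. by rewrite dotC ReC. Qed.

Lemma dot_adj (A : 'M[C]_n) x y : dot x (A *m y) = dot (adj A *m x) y.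
Proof.
rewrite /dot /adj.
under eq_bigr => k _ do rewrite mxE mulr_sumr.
rewrite exchange_big /=; apply: eq_bigr => j _.
rewrite !mxE cj_sum mulr_suml; apply: eq_bigr => k _.
by rewrite !mxE cjM cjK; ring.
Qed.

Lemma adj_dot (x y : 'cV[C]_n) : (adj x *m y) 0 0 = dot x y.
Proof. rewrite mxE /dot; apply: eq_bigr => k _; by rewrite !mxE. Qed.

Lemma qformE (A : 'M[C]_n) z : qform A z = dot z (A *m z).
Proof. by rewrite /qform -mulmxA adj_dot. Qed.

Lemma rank1E (x y z : 'cV[C]_n) : (x *m adj y) *m z = dot y z *: x.
Proof.
rewrite -mulmxA [adj y *m z]mx11_scalar adj_dot.
by rewrite mul_mx_scalar.
Qed.

Lemma dotxx x : dot x x = (\sum_k cn2 (x k 0))%:C%C.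
Proof. rewrite /dot (big_morph _ (@rmorphD _ _ (real_complex R)) (@rmorph0 _ _ (real_complex R))); apply: eq_bigr => k _; exact: cn2E. Qed.
Lemma nsqE x : nsq x = \sum_k cn2 (x k 0).
Proof. by rewrite /nsq dotxx. Qed.
Lemma dotxxE x : dot x x = (nsq x)%:C%C.
Proof. by rewrite dotxx nsqE. Qed.
Lemma nsq_ge0 x : 0 <= nsq x.
Proof. rewrite nsqE; apply: sumr_ge0 => k _; exact: cn2_ge0. Qed.
Lemma N_ge0 x : 0 <= N x. Proof. exact: sqrtr_ge0. Qed.
Lemma N_sq x : N x ^+ 2 = nsq x.
Proof. by rewrite sqr_sqrtr // nsq_ge0. Qed.
Lemma vnormE x : vnorm x = N x.
Proof. by rewrite /vnorm /N nsqE /cn2. Qed.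

Lemma nsqD x y : nsq (x + y) = nsq x + 2 * complex.Re (dot x y) + nsq y.
Proof.
rewrite /nsq dotDl !dotDr !ReD (Redot_sym x y); ring.
Qed.
Lemma nsqN x : nsq (- x) = nsq x.
Proof. by rewrite /nsq dotNl dotNr opprK. Qed.
Lemma nsqZ a x : nsq (a *: x) = cn2 a * nsq x.
Proof. rewrite /nsq dotZl dotZr mulrA cn2E dotxxE -rmorphM. done. Qed.
Lemma NN x : N (- x) = N x. Proof. by rewrite /N nsqN. Qed.
Lemma NZ a x : N (a *: x) = Num.sqrt (cn2 a) * N x.
Proof. by rewrite /N nsqZ sqrtrM // cn2_ge0. Qed.
Lemma NZr (a : R) x : N ((a%:C)%C *: x) = `|a| * N x.
Proof. by rewrite NZ cn2_real sqrtr_sqr. Qed.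

Lemma CS_sq x y : complex.Re (dot x y) ^+ 2 <= nsq x * nsq y.
Proof.
set t := complex.Re (dot x y).
have key : forall s : R, 0 <= nsq x + 2 * s * t + s ^+ 2 * nsq y.
  move=> s; have := nsq_ge0 (x + (s%:C)%C *: y).
  by rewrite nsqD nsqZ dotZr ReMr cn2_real -/t mulrA.
have px := nsq_ge0 x; have py := nsq_ge0 y.
have [q0|qp] := eqVneq (nsq y) 0.
  rewrite q0 mulr0.
  have [t0|tn] := eqVneq t 0; first by rewrite t0 expr0n.
  have := key (- (nsq x + 1) / (2 * t)); rewrite q0 mulr0 addr0.
  have -> : 2 * (- (nsq x + 1) / (2 * t)) * t = - (nsq x + 1).
    field. by rewrite tn.
  lra.
have qpos : 0 < nsq y by rewrite lt_def qp py.
have := key (- t / nsq y).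
have -> : nsq x + 2 * (- t / nsq y) * t + (- t / nsq y) ^+ 2 * nsq y
   = (nsq x * nsq y - t ^+ 2) / nsq y by field.
move=> H; have : 0 <= (nsq x * nsq y - t ^+ 2) / nsq y * nsq y.
  by apply: mulr_ge0 => //; apply: ltW.
rewrite divfK ?qp //; lra.
Qed.

Lemma sq_le (a b : R) : 0 <= b -> a ^+ 2 <= b ^+ 2 -> a <= b.
Proof. move=> hb h. case: (lerP a b) => // hab. nra. Qed.

Lemma CS x y : complex.Re (dot x y) <= N x * N y.
Proof.
apply: sq_le; first by apply: mulr_ge0; apply: N_ge0.
by rewrite exprMn !N_sq; apply: CS_sq.
Qed.
Lemma CSabs x y : `|complex.Re (dot x y)| <= N x * N y.
Proof.
rewrite ler_norml CS andbT.
have := CS (- x) y; rewrite dotNl ReN NN; lra.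
Qed.

Lemma ND x y : N (x + y) <= N x + N y.
Proof.
apply: sq_le; first by apply: addr_ge0; apply: N_ge0.
rewrite N_sq nsqD.
have := CS x y; rewrite -(N_sq x) -(N_sq y); nra.
Qed.
Lemma NB x y : N (x - y) <= N x + N y.
Proof. by rewrite -(NN y); apply: ND. Qed.

Lemma N0 : N 0 = 0.
Proof. by rewrite /N /nsq dot0r Re0 sqrtr0. Qed.

Lemma N_sum (I : Type) (s : seq I) (P : pred I) (F : I -> 'cV[C]_n) :
  N (\sum_(i <- s | P i) F i) <= \sum_(i <- s | P i) N (F i).
Proof.
elim/big_rec2: _ => [|i a b _ h]; first by rewrite N0.
by apply: le_trans (ND _ _) _; apply: lerD.
Qed.

Definition orthoN (f : nat -> 'cV[C]_n) (s : seq nat) :=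
  forall i j, i \in s -> j \in s -> dot (f i) (f j) = (i == j)%:R.

Lemma dot_on f s c j : uniq s -> orthoN f s -> j \in s ->
  dot (f j) (\sum_(i <- s) c i *: f i) = c j.
Proof.
move=> us hf js; rewrite dot_sumr (bigD1_seq j) //= dotZr hf // eqxx mulr1.
rewrite big_seq_cond big1 ?addr0 // => i /andP[iS hij]; rewrite dotZr hf //.
by rewrite eq_sym (negbTE hij) mulr0.
Qed.

Lemma nsq_on f s c : uniq s -> orthoN f s ->
  nsq (\sum_(i <- s) c i *: f i) = \sum_(i <- s) cn2 (c i).
Proof.
move=> us hf; rewrite /nsq dot_suml Re_sum big_seq [RHS]big_seq.
apply: eq_bigr => j js; by rewrite dotZl dot_on // cn2E.
Qed.

Lemma N_on f s c : uniq s -> orthoN f s ->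
  N (\sum_(i <- s) c i *: f i) = Num.sqrt (\sum_(i <- s) cn2 (c i)).
Proof. by move=> us hf; rewrite /N nsq_on. Qed.

Lemma bessel f s x : uniq s -> orthoN f s ->
  \sum_(i <- s) cn2 (dot (f i) x) <= nsq x.
Proof.
move=> us hf; set p := \sum_(i <- s) dot (f i) x *: f i.
have hp : complex.Re (dot p x) = \sum_(i <- s) cn2 (dot (f i) x).
  rewrite /p dot_suml Re_sum; apply: eq_bigr => i _; by rewrite dotZl cn2E.
have := nsq_ge0 (x - p); rewrite nsqD nsqN dotNr ReN Redot_sym hp /p nsq_on //.
lra.
Qed.

Lemma cn2_le_nsq x k : cn2 (x k 0) <= nsq x.
Proof.
rewrite nsqE (bigD1 k) //= lerDl; apply: sumr_ge0 => j _; exact: cn2_ge0.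
Qed.

Lemma mulmx_cols (H : 'M[C]_n) x : H *m x = \sum_k x k 0 *: col k H.
Proof.
apply/matrixP => i j; rewrite !mxE summxE; apply: eq_bigr => k _.
by rewrite !mxE (ord1 j) mulrC.
Qed.

Lemma N_bound (H : 'M[C]_n) x : N (H *m x) <= N x * \sum_k N (col k H).
Proof.
rewrite mulmx_cols mulr_sumr.
apply: le_trans; first exact: N_sum.
apply: ler_sum => k _; rewrite NZ; apply: ler_wpM2r; first exact: N_ge0.
by rewrite /N; apply: ler_wsqrtr; apply: cn2_le_nsq.
Qed.

Lemma spec_ub (H : 'M[C]_n) :
  has_ubound [set vnorm (H *m x) | x in [set x : 'cV[C]_n | vnorm x = 1]].
Proof.
exists (\sum_k N (col k H)) => _ [x /= hx <-].
rewrite vnormE; apply: le_trans (N_bound H x) _.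
by rewrite -vnormE hx mul1r.
Qed.

Lemma specN (H : 'M[C]_n) x : N (H *m x) <= specnorm H * N x.
Proof.
have [x0|xp] := eqVneq (N x) 0.
  have := N_bound H x; rewrite x0 mul0r mulr0 => h.
  by apply: le_trans h _.
have xpos : 0 < N x by rewrite lt_def xp N_ge0.
set y := ((N x)^-1)%:C%C *: x.
have Ny : N y = 1 by rewrite /y NZr ger0_norm ?invr_ge0 ?N_ge0 // mulVf.
have : N (H *m y) <= specnorm H.
  apply: (ub_le_sup (spec_ub H)); exists y; first by rewrite /= vnormE.
  by rewrite vnormE.
rewrite /y -scalemxAr NZr ger0_norm ?invr_ge0 ?N_ge0 //.
move=> h; have ixp : 0 < (N x)^-1 by rewrite invr_gt0.
rewrite -(ler_pM2l ixp) mulrCA mulVf // mulr1; first [exact: h | by rewrite mulrC].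
Qed.

Lemma spec_ge0 (H : 'M[C]_n) : (0 < n)%N -> 0 <= specnorm H.
Proof.
move=> hn; set j := Ordinal hn.
set e : 'cV[C]_n := \col_k ((k == j)%:R).
have ne : vnorm e = 1.
  rewrite vnormE /N nsqE (bigD1 j) //= big1 => [|k hk].
    by rewrite !mxE eqxx addr0 /cn2 /= expr0n /= addr0 expr1n sqrtr1.
  by rewrite !mxE (negbTE hk) /cn2 /= expr0n /= addr0.
apply: le_trans (_ : vnorm (H *m e) <= _).
  by rewrite vnormE N_ge0.
apply: (ub_le_sup (spec_ub H)); by exists e.
Qed.

Lemma specNadj (H : 'M[C]_n) x : 0 <= specnorm H ->
  N (adj H *m x) <= specnorm H * N x.
Proof.
move=> h0; set y := adj H *m x.
have e : nsq y = complex.Re (dot x (H *m y)) by rewrite dot_adj.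
have h1 := CS x (H *m y); have h2 := specN H y.
rewrite -e -N_sq in h1.
move: h1 h2; have := N_ge0 y; have := N_ge0 x; have := N_ge0 (H *m y).
set a := N y; set b := N (H *m y); set c := N x; set h := specnorm H.
move=> hb hc ha h1 h2.
case: (lerP a (h * c)) => // hlt.
have : c * b <= c * (h * a) by apply: ler_wpM2l.
have apos : 0 < a by apply: le_lt_trans hlt; apply: mulr_ge0.
have : (h * c) * a < a * a by rewrite ltr_pM2r.
nra.
Qed.
End Basic.

Lemma sum_shift (V : nmodType) p (F : nat -> V) :
  \sum_(1 <= k < p.+1) F k = \sum_(k < p) F k.+1.
Proof. by rewrite big_add1 /= big_mkord. Qed.

Lemma kernel_exists (R : realType) (m p : nat) (a : nat -> nat -> R[i]) : (m < p)%N ->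
  exists c : nat -> R[i], (exists2 k, (1 <= k <= p)%N & c k != 0) /\
    forall j, (1 <= j <= m)%N -> \sum_(1 <= k < p.+1) a j k * c k = 0.
Proof.
case: p => [//|p] hmp.
pose A : 'M[R[i]]_(p.+1, m) := \matrix_(k, j) a j.+1 k.+1.
pose K := kermx A.
have Kn0 : K != 0.
  rewrite -mxrank_eq0 mxrank_ker.
  have := rank_leq_col A; move=> h; apply/eqP => h2.
  have : (p.+1 <= \rank A)%N by rewrite -subn_eq0 h2.
  move=> h3; have := leq_trans h3 h; rewrite leqNgt hmp //.
have [i hi] : exists i, row i K != 0.
  case: (boolP [exists i, row i K != 0]) => [/existsP //|/existsPn h].
  move/eqP: Kn0 => []; apply/row_matrixP => i; rewrite row0; exact/eqP/negPn/h.
have hrow : row i K *m A = 0 by rewrite -row_mul mulmx_ker row0.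
set ri := row i K in hi hrow.
pose c := fun k : nat => if (0 < k <= p.+1)%N then ri 0 (inord k.-1) else 0.
exists c; split.
  have [k hk] : exists k, ri 0 k != 0.
    case: (boolP [exists k, ri 0 k != 0]) => [/existsP //|/existsPn h].
    move/eqP: hi => []; apply/matrixP => x y; rewrite (ord1 x) mxE. move: (h y); rewrite negbK => /eqP e. rewrite [RHS]mxE -e /ri; by rewrite [in RHS]mxE.
  exists k.+1; first by rewrite /= ltn_ord.
  by rewrite /c /= ltn_ord /= inord_val.
move=> j /andP[j1 jm].
have hj : (j.-1 < m)%N by case: j j1 jm.
have := congr1 (fun M : 'M[R[i]]_(1, m) => M 0 (Ordinal hj)) hrow; rewrite !mxE => e; apply: (etrans _ e).
rewrite sum_shift; apply: eq_bigr => k _.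
rewrite /c /= ltn_ord /= inord_val mxE mulrC /=.
by rewrite [A _ _]mxE /= prednK.
Qed.

Section Adj.
Variable R : realType.
Local Notation C := R[i].

Lemma adjE m p (A : 'M[C]_(m, p)) i j : adj A i j = Num.conj (A j i).
Proof. by rewrite /adj !mxE. Qed.
Lemma adjD m p (A B : 'M[C]_(m, p)) : adj (A + B) = adj A + adj B.
Proof. apply/matrixP => i j; by rewrite !mxE cjD. Qed.
Lemma adj0 m p : adj (0 : 'M[C]_(m, p)) = 0.
Proof. apply/matrixP => i j; by rewrite !mxE cj0. Qed.
Lemma adj_sum m p (I : Type) (s : seq I) (P : pred I) (F : I -> 'M[C]_(m, p)) :
  adj (\sum_(i <- s | P i) F i) = \sum_(i <- s | P i) adj (F i).
Proof. exact: (big_morph _ (@adjD m p) (@adj0 m p)). Qed.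
Lemma adjZr m p (a : R) (A : 'M[C]_(m, p)) : adj ((a%:C)%C *: A) = (a%:C)%C *: adj A.
Proof. apply/matrixP => i j; by rewrite !mxE cjM conj_real. Qed.
Lemma adjM m p q (A : 'M[C]_(m, p)) (B : 'M[C]_(p, q)) : adj (A *m B) = adj B *m adj A.
Proof.
apply/matrixP => i j; rewrite !mxE cj_sum; apply: eq_bigr => k _.
by rewrite !mxE cjM mulrC.
Qed.
Lemma adjK m p (A : 'M[C]_(m, p)) : adj (adj A) = A.
Proof. apply/matrixP => i j; by rewrite !mxE cjK. Qed.

Lemma ortho_sub n (f : nat -> 'cV[C]_n) s s' : orthoN f s -> {subset s' <= s} -> orthoN f s'.
Proof. move=> h hs i j hi hj; apply: h; by apply: hs. Qed.

Lemma sum_delta n (f : nat -> 'cV[C]_n) (g : nat -> 'cV[C]_n) (F : nat -> C) s i :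
  uniq s -> orthoN f s -> i \in s ->
  \sum_(j <- s) (F j * dot (f j) (f i)) *: g j = F i *: g i.
Proof.
move=> us hf hi; rewrite (bigD1_seq i) //= hf // eqxx mulr1.
rewrite big_seq_cond big1 ?addr0 // => j /andP[jS hij]; rewrite hf //.
by rewrite (negbTE hij) mulr0 scale0r.
Qed.
End Adj.

Section K2.
Variable R : realType.
Local Notation C := R[i].

Lemma sum_nat_delta (s : seq nat) a (F : nat -> C) : uniq s -> a \in s ->
  \sum_(k <- s) (k == a)%:R * F k = F a.
Proof.
move=> us ha; rewrite (bigD1_seq a) //= eqxx mul1r big1 ?addr0 // => k hk.
by rewrite (negbTE hk) mul0r.
Qed.

Lemma kern2 n (p K m : nat) (f g : nat -> 'cV[C]_n) : (m < K)%N -> (K <= p)%N ->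
  exists c : nat -> C, (exists2 k, k \in index_iota 1 p.+1 & c k != 0) /\
    (forall k, (K < k <= p)%N -> c k = 0) /\
    forall j, (1 <= j <= m)%N -> dot (g j) (\sum_(k <- index_iota 1 p.+1) c k *: f k) = 0.
Proof.
move=> hmK hKp.
pose a := fun j k : nat => if (j <= m)%N then dot (g j) (f k) else (k == j - m + K)%N%:R : C.
have hlt : (m + (p - K) < p)%N by lia.
have [c [[k hk ck] hc]] := kernel_exists a hlt.
exists c; split; first by exists k => //; rewrite mem_index_iota.
split.
  move=> k' /andP[h1 h2].
  have := hc (k' - K + m)%N; rewrite /a.
  have -> : (k' - K + m <= m)%N = false by lia.
  have -> : (k' - K + m - m + K = k')%N by lia.
  rewrite sum_nat_delta; [ | exact: iota_uniq | rewrite mem_index_iota; lia].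
  apply; lia.
move=> j hj; rewrite dot_sumr.
have := hc j; rewrite /a.
have -> : (j <= m)%N by lia.
have hj2 : (1 <= j <= m + (p - K))%N by lia.
move=> /(_ hj2) e0; apply: (etrans _ e0); apply: eq_bigr => k' _; by rewrite dotZr mulrC.
Qed.
End K2.

Section Main.
Variable R : realType.
Local Notation C := R[i].
Variables (n r rs : nat) (Qs H : 'M[C]_n) (lam : nat -> R) (u : nat -> 'cV[C]_n)
  (sig : nat -> R) (v w : nat -> 'cV[C]_n).
Hypothesis Hrs : (rs <= n)%N.
Hypothesis Hlpos : forall j, (1 <= j <= rs)%N -> 0 < lam j.
Hypothesis Hl0 : forall j, (rs < j)%N -> lam j = 0.
Hypothesis Hlmono : forall j, (1 <= j)%N -> lam j.+1 <= lam j.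
Hypothesis Hu : forall i j, (1 <= i <= rs)%N -> (1 <= j <= rs)%N ->
     adj (u i) *m u j = (i == j)%:R%:M.
Hypothesis HQs : Qs = \sum_(1 <= i < rs.+1) ((lam i)%:C)%C *: (u i *m adj (u i)).
Hypothesis Hv : forall i j, (1 <= i <= n)%N -> (1 <= j <= n)%N ->
     adj (v i) *m v j = (i == j)%:R%:M.
Hypothesis Hw : forall i j, (1 <= i <= n)%N -> (1 <= j <= n)%N ->
     adj (w i) *m w j = (i == j)%:R%:M.
Hypothesis Hsig0 : forall j, (1 <= j <= n)%N -> 0 <= sig j.
Hypothesis Hsigmono : forall j, (1 <= j)%N -> (j < n)%N -> sig j.+1 <= sig j.
Hypothesis HQ : Qs + H = \sum_(1 <= i < n.+1) ((sig i)%:C)%C *: (v i *m adj (w i)).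
Hypothesis Hr1 : (1 <= r)%N.
Hypothesis Hrrs : (r <= rs)%N.

Local Notation I m := (index_iota 1 m.+1).
Let h := specnorm H.

Lemma ortho_of (f : nat -> 'cV[C]_n) m :
  (forall i j, (1 <= i <= m)%N -> (1 <= j <= m)%N -> adj (f i) *m f j = (i == j)%:R%:M) ->
  orthoN f (I m).
Proof.
move=> hf i j; rewrite !mem_index_iota !ltnS => hi hj.
by rewrite -adj_dot hf // mxE eqxx mulr1n.
Qed.

Lemma ou : orthoN u (I rs). Proof. exact: ortho_of. Qed.
Lemma ov : orthoN v (I n). Proof. exact: ortho_of. Qed.
Lemma ow : orthoN w (I n). Proof. exact: ortho_of. Qed.
Lemma uI m : uniq (I m). Proof. exact: iota_uniq. Qed.

Lemma subI m p : (m <= p)%N -> {subset I m <= I p}.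
Proof. move=> hmp i; rewrite !mem_index_iota !ltnS => /andP[-> /leq_trans]; exact. Qed.

Lemma n_pos : (0 < n)%N.
Proof. exact: leq_trans Hr1 (leq_trans Hrrs Hrs). Qed.
Lemma h_ge0 : 0 <= h.
Proof. exact: spec_ge0 n_pos. Qed.

Lemma lam_anti i j : (1 <= i)%N -> (i <= j)%N -> lam j <= lam i.
Proof.
move=> hi; elim: j => [|j IH]; first by rewrite leqn0 => /eqP ->.
rewrite leq_eqVlt => /orP[/eqP -> //|]; rewrite ltnS => hij.
apply: le_trans (IH hij); apply: Hlmono; exact: leq_trans hi hij.
Qed.
Lemma lam_ge0 j : (1 <= j)%N -> 0 <= lam j.
Proof.
move=> j1; case: (ltnP rs j) => hj; first by rewrite Hl0.
by apply: ltW; apply: Hlpos; rewrite j1.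
Qed.
Lemma lam_le1 j : (1 <= j)%N -> lam j <= lam 1.
Proof. by move=> j1; apply: lam_anti. Qed.

Lemma sig_anti i j : (1 <= i)%N -> (i <= j)%N -> (j <= n)%N -> sig j <= sig i.
Proof.
move=> hi; elim: j => [|j IH]; first by rewrite leqn0 => /eqP ->.
rewrite leq_eqVlt => /orP[/eqP -> //|]; rewrite ltnS => hij hjn.
apply: le_trans (IH hij (ltnW hjn)); apply: Hsigmono => //; exact: leq_trans hi hij.
Qed.

Lemma Qs_mul x : Qs *m x = \sum_(i <- I rs) ((lam i)%:C%C * dot (u i) x) *: u i.
Proof.
rewrite HQs mulmx_suml; apply: eq_bigr => i _.
by rewrite -scalemxAl rank1E scalerA.
Qed.

Lemma Q_mul x : (Qs + H) *m x = \sum_(i <- I n) ((sig i)%:C%C * dot (w i) x) *: v i.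
Proof.
rewrite HQ mulmx_suml; apply: eq_bigr => i _.
by rewrite -scalemxAl rank1E scalerA.
Qed.

Lemma adjQ : adj (Qs + H) = \sum_(i <- I n) ((sig i)%:C)%C *: (w i *m adj (v i)).
Proof.
rewrite HQ adj_sum; apply: eq_bigr => i _; by rewrite adjZr adjM adjK.
Qed.

Lemma adjQs : adj Qs = Qs.
Proof.
rewrite {1}HQs adj_sum HQs; apply: eq_bigr => i _; by rewrite adjZr adjM adjK.
Qed.

Lemma Qadj_mul x : adj (Qs + H) *m x = \sum_(i <- I n) ((sig i)%:C%C * dot (v i) x) *: w i.
Proof.
rewrite adjQ mulmx_suml; apply: eq_bigr => i _.
by rewrite -scalemxAl rank1E scalerA.
Qed.

Lemma Qw i : i \in I n -> (Qs + H) *m w i = (sig i)%:C%C *: v i.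
Proof. move=> hi; rewrite Q_mul; apply: sum_delta => //; [exact: uI | exact: ow]. Qed.
Lemma Qv i : i \in I n -> adj (Qs + H) *m v i = (sig i)%:C%C *: w i.
Proof. move=> hi; rewrite Qadj_mul; apply: sum_delta => //; [exact: uI | exact: ov]. Qed.

Lemma Qs_w i : i \in I n -> Qs *m w i = (sig i)%:C%C *: v i - H *m w i.
Proof. move=> hi; rewrite -(Qw hi) mulmxDl; by rewrite addrK. Qed.
Lemma Qs_v i : i \in I n -> Qs *m v i = (sig i)%:C%C *: w i - adj H *m v i.
Proof. move=> hi; rewrite -(Qv hi) adjD adjQs mulmxDl; by rewrite addrK. Qed.

Definition d i := w i - v i.
Definition e i := adj H *m v i - H *m w i.

Lemma Qs_d i : i \in I n -> Qs *m d i = e i - (sig i)%:C%C *: d i.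
Proof.
move=> hi; rewrite /d /e mulmxBr Qs_w // Qs_v // scalerBr.
set A := H *m w i; set B := adj H *m v i.
apply/matrixP => a b; rewrite !mxE; ring.
Qed.

Lemma N_le (x y : 'cV[C]_n) : nsq x <= nsq y -> N x <= N y.
Proof. by move=> hxy; apply: ler_wsqrtr. Qed.

Lemma Qs_dot x : complex.Re (dot x (Qs *m x)) = \sum_(i <- I rs) lam i * cn2 (dot (u i) x).
Proof.
rewrite Qs_mul dot_sumr Re_sum; apply: eq_bigr => i _.
rewrite dotZr (dotC (u i) x) -mulrA [dot _ _ * _]mulrC cn2E. rewrite /=; ring.
Qed.

Lemma Qs_nsq x : nsq (Qs *m x) = \sum_(i <- I rs) lam i ^+ 2 * cn2 (dot (u i) x).
Proof.
rewrite Qs_mul nsq_on; [|exact: uI|exact: ou].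
apply: eq_bigr => i _; by rewrite cn2M cn2_real.
Qed.

Lemma lam_sq i : i \in I rs -> lam i ^+ 2 <= lam 1 * lam i.
Proof.
rewrite mem_index_iota => /andP[i1 _].
have := lam_ge0 i1; have := lam_le1 i1; nra.
Qed.

Lemma Qs_N x : N (Qs *m x) <= lam 1 * N x.
Proof.
have l1 : 0 <= lam 1 by apply: lam_ge0.
apply: sq_le; first by apply: mulr_ge0 => //; apply: N_ge0.
rewrite N_sq exprMn N_sq Qs_nsq.
apply: le_trans (_ : \sum_(i <- I rs) lam 1 ^+ 2 * cn2 (dot (u i) x) <= _).
  rewrite big_seq [X in _ <= X]big_seq; apply: ler_sum => i hi.
  apply: ler_wpM2r; first exact: cn2_ge0.
  have := lam_sq hi; rewrite mem_index_iota in hi; case/andP: hi => i1 _.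
  have := lam_ge0 i1; have := lam_le1 i1; nra.
rewrite -mulr_sumr; apply: ler_wpM2l; first exact: sqr_ge0.
apply: bessel; [exact: uI|exact: ou].
Qed.

Lemma Qs_contr (al : R) x : 0 <= al -> al * lam 1 <= 1 ->
  N (x - (al%:C)%C *: (Qs *m x)) <= N x.
Proof.
move=> a0 a1; apply: N_le.
rewrite nsqD nsqN dotNr ReN nsqZ cn2_real dotZr.
have -> : complex.Re ((al%:C)%C * dot x (Qs *m x)) = al * complex.Re (dot x (Qs *m x)).
  by case: (dot x (Qs *m x)) => p q /=; ring.
rewrite Qs_dot Qs_nsq.
set S1 := \sum_(i <- I rs) lam i * cn2 (dot (u i) x).
set S2 := \sum_(i <- I rs) lam i ^+ 2 * cn2 (dot (u i) x).
have S12 : S2 <= lam 1 * S1.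
  rewrite /S2 /S1 mulr_sumr big_seq [X in _ <= X]big_seq; apply: ler_sum => i hi.
  rewrite mulrA; apply: ler_wpM2r; [exact: cn2_ge0| exact: lam_sq].
have S10 : 0 <= S1.
  rewrite /S1 big_seq; apply: sumr_ge0 => i; rewrite mem_index_iota => /andP[i1 _].
  apply: mulr_ge0; [exact: lam_ge0 | exact: cn2_ge0].
have l1 : 0 <= lam 1 by apply: lam_ge0.
have : al ^+ 2 * S2 <= al * S1.
  apply: le_trans (_ : al ^+ 2 * (lam 1 * S1) <= _); first by apply: ler_wpM2l => //; exact: sqr_ge0.
  rewrite expr2 -mulrA; apply: ler_wpM2l => //; rewrite mulrA; nra.
nra.
Qed.

Lemma rn : (r <= n)%N. Proof. exact: leq_trans Hrrs Hrs. Qed.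
Lemma owr : orthoN w (I r). Proof. apply: ortho_sub ow _; apply: subI; exact: rn. Qed.
Lemma ovr : orthoN v (I r). Proof. apply: ortho_sub ov _; apply: subI; exact: rn. Qed.
Lemma Ir_n i : i \in I r -> i \in I n. Proof. apply: subI; exact: rn. Qed.

Definition q (y : nat -> C) := \sum_(i <- I r) y i *: d i.
Definition Ey (y : nat -> C) := \sum_(i <- I r) y i *: e i.
Definition Ny (y : nat -> C) := Num.sqrt (\sum_(i <- I r) cn2 (y i)).

Lemma Ny_ge0 y : 0 <= Ny y. Proof. exact: sqrtr_ge0. Qed.

Lemma q_split y : q y = \sum_(i <- I r) y i *: w i - \sum_(i <- I r) y i *: v i.
Proof. rewrite /q /d -sumrB; apply: eq_bigr => i _; by rewrite scalerBr. Qed.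

Lemma q_N y : N (q y) <= 2 * Ny y.
Proof.
rewrite q_split; apply: le_trans (NB _ _) _.
rewrite !N_on; [|exact: uI|exact: ovr|exact: uI|exact: owr].
rewrite -/(Ny y); lra.
Qed.

Lemma E_split y : Ey y = adj H *m (\sum_(i <- I r) y i *: v i) - H *m (\sum_(i <- I r) y i *: w i).
Proof.
rewrite /Ey /e !mulmx_sumr -sumrB; apply: eq_bigr => i _.
by rewrite scalerBr !scalemxAr.
Qed.

Lemma E_N y : N (Ey y) <= 2 * h * Ny y.
Proof.
rewrite E_split; apply: le_trans (NB _ _) _.
apply: le_trans (lerD (specNadj _ h_ge0) (specN _ _)) _.
rewrite !N_on; [|exact: uI|exact: owr|exact: uI|exact: ovr].
rewrite -/(Ny y) -/h; lra.
Qed.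

Lemma Ny_scale (f : nat -> R) (c : R) y : 0 <= c ->
  (forall i, i \in I r -> f i ^+ 2 <= c ^+ 2) ->
  Ny (fun i => (f i)%:C%C * y i) <= c * Ny y.
Proof.
move=> c0 hf; apply: sq_le; first by apply: mulr_ge0 => //; apply: Ny_ge0.
rewrite exprMn /Ny !sqr_sqrtr; last 2 first.
- by apply: sumr_ge0 => i _; apply: cn2_ge0.
- by apply: sumr_ge0 => i _; apply: cn2_ge0.
rewrite mulr_sumr big_seq [X in _ <= X]big_seq; apply: ler_sum => i hi.
rewrite cn2M cn2_real; apply: ler_wpM2r; [exact: cn2_ge0 | exact: hf].
Qed.

Lemma q_step (al : R) y :
  q y = (q (fun i => ((1 - al * sig i)%:C)%C * y i)
          - (al%:C)%C *: (Qs *m q (fun i => ((1 - al * sig i)%:C)%C * y i)))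
        + (al%:C)%C *: Ey y
        - ((al ^+ 2)%:C)%C *: (Qs *m q (fun i => ((sig i)%:C)%C * y i)).
Proof.
rewrite /q /Ey !mulmx_sumr !scaler_sumr -!sumrB -big_split -sumrB /=.
rewrite big_seq [RHS]big_seq; apply: eq_bigr => i hi.
rewrite -!scalemxAr !Qs_d ?Ir_n //.
set D := d i; set E := e i.
apply/matrixP => a b; rewrite !mxE /=.
rewrite !rmorphB !rmorphM rmorph1 /=.
ring.
Qed.

Lemma sig_rng i : i \in I r -> sig r <= sig i <= sig 1.
Proof.
rewrite mem_index_iota ltnS => /andP[i1 ir].
have irn : (i <= n)%N by exact: leq_trans ir rn.
apply/andP; split; first exact: (sig_anti i1 ir rn).
exact: (sig_anti (isT : (1 <= 1)%N) i1 irn).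
Qed.
Lemma sig_ge0' i : i \in I r -> 0 <= sig i.
Proof.
rewrite mem_index_iota ltnS => /andP[i1 ir]; apply: Hsig0; rewrite i1 /=.
exact: leq_trans ir rn.
Qed.

Section Iter.
Variable al : R.
Hypothesis al0 : 0 < al.
Hypothesis al1 : al * lam 1 <= 1.
Hypothesis al2 : al * sig 1 <= 1.
Hypothesis sr0 : 0 < sig r.

Local Notation rho := (1 - al * sig r).
Local Notation K := (2 * al * h + 2 * al ^+ 2 * lam 1 * sig 1).

Lemma rho_ge0 : 0 <= rho.
Proof.
have := sig_rng (_ : r \in I r); rewrite mem_index_iota Hr1 ltnSn => /(_ isT) /andP[_ h1].
have : al * sig r <= al * sig 1 by apply: ler_wpM2l => //; apply: ltW.
move=> hh; rewrite subr_ge0; exact: le_trans hh al2.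
Qed.

Lemma NyS y : Ny (fun i => ((1 - al * sig i)%:C)%C * y i) <= rho * Ny y.
Proof.
apply: Ny_scale; first exact: rho_ge0.
move=> i hi; have /andP[h1 h2] := sig_rng hi.
have a1 : al * sig i <= al * sig 1 by apply: ler_wpM2l => //; apply: ltW.
have a2 : al * sig r <= al * sig i by apply: ler_wpM2l => //; apply: ltW.
have x0 : 0 <= 1 - al * sig i by move: a1 al2; lra.
have xy : 1 - al * sig i <= 1 - al * sig r by move: a2; lra.
move: x0 xy; nra.
Qed.

Lemma NySg y : Ny (fun i => ((sig i)%:C)%C * y i) <= sig 1 * Ny y.
Proof.
have hr : r \in I r by rewrite mem_index_iota Hr1 ltnSn.
apply: Ny_scale.
  have /andP[_ h1] := sig_rng hr; exact: le_trans (sig_ge0' hr) h1.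
move=> i hi; have /andP[h1 h2] := sig_rng hi; have := sig_ge0' hi.
move: h2; nra.
Qed.

Lemma q_step_N y :
  N (q y) <= N (q (fun i => ((1 - al * sig i)%:C)%C * y i)) + K * Ny y.
Proof.
rewrite {1}(q_step al y).
set A := q _; set B := q _.
apply: le_trans (NB _ _) _.
apply: le_trans (lerD (ND _ _) (lexx _)) _.
have l1 : 0 <= lam 1 by apply: lam_ge0.
have s1 : 0 <= sig 1 by apply: Hsig0; rewrite /= n_pos.
have hA := Qs_contr A (ltW al0) al1.
rewrite !NZr !ger0_norm ?sqr_ge0 ?(ltW al0) //.
have hE := E_N y.
have hB : N (Qs *m B) <= lam 1 * (2 * (sig 1 * Ny y)).
  apply: le_trans (Qs_N _) _; apply: ler_wpM2l => //.
  apply: le_trans (q_N _) _; apply: ler_wpM2l => //; exact: NySg.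
have a0 := ltW al0.
have : al * N (Ey y) <= al * (2 * h * Ny y) by apply: ler_wpM2l.
have : al ^+ 2 * N (Qs *m B) <= al ^+ 2 * (lam 1 * (2 * (sig 1 * Ny y))).
  by apply: ler_wpM2l => //; apply: sqr_ge0.
nra.
Qed.

Lemma K_ge0 : 0 <= K.
Proof.
have l1 : 0 <= lam 1 by apply: lam_ge0.
have s1 : 0 <= sig 1 by apply: Hsig0; rewrite /= n_pos.
have := h_ge0; have a0 := ltW al0.
move=> h0; apply: addr_ge0; apply: mulr_ge0 => //; rewrite ?mulr_ge0 // ?sqr_ge0 //.
Qed.

Lemma q_iter m y : N (q y) <= 2 * rho ^+ m * Ny y + K / (al * sig r) * Ny y.
Proof.
have asr : 0 < al * sig r by apply: mulr_gt0.
have C0 : 0 <= K / (al * sig r) by apply: divr_ge0; [exact: K_ge0 | exact: ltW].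
elim: m y => [|m IH] y.
  have := q_N y; have := Ny_ge0 y; rewrite expr0 mulr1.
  move: C0; nra.
have h1 := q_step_N y.
set y' := (fun i => ((1 - al * sig i)%:C)%C * y i) in h1.
have h2 := IH y'.
have h3 : Ny y' <= rho * Ny y by apply: NyS.
have c0 : 0 <= 2 * rho ^+ m + K / (al * sig r).
  apply: addr_ge0 => //; apply: mulr_ge0 => //; apply: exprn_ge0; exact: rho_ge0.
have h4 : (2 * rho ^+ m + K / (al * sig r)) * Ny y'
    <= (2 * rho ^+ m + K / (al * sig r)) * (rho * Ny y) by apply: ler_wpM2l.
have e1 : K / (al * sig r) * rho + K = K / (al * sig r).
  field; by rewrite (lt0r_neq0 sr0) (lt0r_neq0 al0).
rewrite exprSr.
set Cc := K / (al * sig r) in h2 h4 e1 *.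
set P := rho ^+ m in h2 h4 *.
move: h1 h2 h4 e1; set A := N (q y); set B := N (q y'); set t := Ny y'; set T := Ny y.
move=> h1 h2 h4 e1.
have : A <= (2 * P + Cc) * (rho * T) + K * T by move: h1 h2 h4; lra.
move=> h5.
have -> : 2 * (P * rho) * T + Cc * T = (2 * P + Cc) * (rho * T) + K * T.
  apply/eqP; rewrite -subr_eq0; apply/eqP.
  transitivity ((Cc - (Cc * rho + K)) * T); first ring.
  by rewrite e1 subrr mul0r.
exact: h5.
Qed.
End Iter.

Lemma bern (s : R) m : 0 <= s -> s <= 1 -> (1 - s) ^+ m * (1 + m%:R * s) <= 1.
Proof.
move=> s0 s1; elim: m => [|m IH]; first by rewrite expr0 mul1r mul0r addr0.
have p0 : 0 <= (1 - s) ^+ m by apply: exprn_ge0; lra.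
have e : (1 - s) ^+ m.+1 * (1 + m.+1%:R * s)
   = (1 - s) ^+ m * ((1 - s) * (1 + m.+1%:R * s)) by rewrite exprS; ring.
rewrite e; apply: le_trans IH; apply: ler_wpM2l => //.
rewrite -natr1.
have m0 : 0 <= m%:R :> R by apply: ler0n.
nra.
Qed.

Lemma sylv y : 0 < sig r -> N (q y) <= 2 * h / sig r * Ny y.
Proof.
move=> sr0; apply/ler_addgt0Pr => eps ep.
set T := Ny y; set L := lam 1; set S1 := sig 1.
have T0 : 0 <= T by apply: Ny_ge0.
have L0 : 0 <= L by apply: lam_ge0.
have S10 : 0 <= S1 by apply: Hsig0; rewrite /= n_pos.
have hr : r \in I r by rewrite mem_index_iota Hr1 ltnSn.
have srS1 : sig r <= S1 by have /andP[_ ->] := sig_rng hr.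
have h0 := h_ge0.
set X := L * S1 * T.
have X0 : 0 <= X by rewrite /X !mulr_ge0.
have es : 0 < eps * sig r by apply: mulr_gt0.
set M := L + S1 + 1 + 4 * X / (eps * sig r).
have X' : 0 <= 4 * X / (eps * sig r) by apply: divr_ge0; [lra | exact: ltW].
have M1 : 1 <= M by rewrite /M; lra.
have M0 : 0 < M by lra.
set al := M^-1.
have al0 : 0 < al by rewrite invr_gt0.
have alM : al * M = 1 by rewrite mulVf // lt0r_neq0.
have al1 : al * L <= 1.
  rewrite -alM; apply: ler_wpM2l; [exact: ltW | rewrite /M; lra].
have al2 : al * S1 <= 1.
  rewrite -alM; apply: ler_wpM2l; [exact: ltW | rewrite /M; lra].
set s := al * sig r.
have s0 : 0 < s by apply: mulr_gt0.
have s1 : s <= 1 by apply: le_trans al2; apply: ler_wpM2l => //; exact: ltW.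
have x0 : 0 <= 4 * T / (eps * s) by apply: divr_ge0; [lra | apply: ltW; exact: mulr_gt0].
set m := Num.bound (4 * T / (eps * s)).
have hm : 4 * T / (eps * s) < m%:R by apply: archi_boundP.
have hq := q_iter al0 al1 al2 sr0 m y.
rewrite -/L -/S1 -/T -/s in hq.
have hb := bern m (ltW s0) s1.
have ms : 4 * T / eps <= m%:R * s.
  have : 4 * T / (eps * s) * s = 4 * T / eps by field; rewrite (lt0r_neq0 s0) (lt0r_neq0 ep).
  move=> <-; apply: ler_wpM2r; [exact: ltW | exact: ltW].
have g1 : 2 * (1 - s) ^+ m * T <= eps / 2.
  have p0 : 0 <= (1 - s) ^+ m by apply: exprn_ge0; lra.
  have : 4 * T <= eps * (m%:R * s).
    have : eps * (4 * T / eps) = 4 * T by field; rewrite (lt0r_neq0 ep).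
    move=> <-; apply: ler_wpM2l => //; exact: ltW.
  move: hb; nra.
have g2 : (2 * al * h + 2 * al ^+ 2 * L * S1) / s * T = 2 * h / sig r * T + 2 * al * X / sig r.
  rewrite /X /s; field. by rewrite (lt0r_neq0 sr0) (lt0r_neq0 al0).
have g3 : 2 * al * X / sig r <= eps / 2.
  have e : 2 * al * X / sig r = 2 * X / (M * sig r).
    rewrite /al; field; by rewrite (lt0r_neq0 sr0) (lt0r_neq0 M0).
  rewrite e ler_pdivrMr; last by apply: mulr_gt0.
  have : M * (eps * sig r) = (L + S1 + 1) * (eps * sig r) + 4 * X.
    rewrite /M; field; by rewrite (lt0r_neq0 sr0) (lt0r_neq0 ep).
  have : 0 <= (L + S1 + 1) * (eps * sig r) by apply: mulr_ge0; [lra | exact: ltW].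
  move=> h1 h2; have : eps / 2 * (M * sig r) = (M * (eps * sig r)) / 2 by ring.
  move=> ->; rewrite h2; lra.
move: hq; rewrite g2; move: g1 g3; lra.
Qed.

Lemma cn2_0 : cn2 (0 : C) = 0.
Proof. by rewrite /cn2 /= expr0n /= addr0. Qed.

Lemma cn2_pos (c : C) : c != 0 -> 0 < cn2 c.
Proof.
move=> hc; rewrite lt_def cn2_ge0 andbT; apply: contra hc.
case: c => a b; rewrite /cn2 /= paddr_eq0 ?sqr_ge0 // !sqrf_eq0 => /andP[/eqP -> /eqP ->].
by [].
Qed.

Lemma sum_pos (s : seq nat) (c : nat -> C) k : uniq s -> k \in s -> c k != 0 ->
  0 < \sum_(i <- s) cn2 (c i).
Proof.
move=> us hk ck; rewrite (bigD1_seq k) //=.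
apply: lt_le_trans (cn2_pos ck) _; rewrite lerDl; apply: sumr_ge0 => i _; exact: cn2_ge0.
Qed.

Lemma weyl_low : lam r - h <= sig r.
Proof.
have hmK : (r.-1 < r)%N by rewrite prednK.
have [c [[k hk ck] [hc0 hc]]] := kern2 u w hmK Hrrs.
set x := \sum_(k <- I rs) c k *: u k in hc.
have dux i : i \in I rs -> dot (u i) x = c i.
  move=> hi; apply: dot_on => //; [exact: uI | exact: ou].
have nx : nsq x = \sum_(i <- I rs) cn2 (c i) by rewrite nsq_on //; [exact: uI|exact: ou].
have nxp : 0 < nsq x by rewrite nx; apply: (sum_pos (uI rs) hk ck).
have hr : (1 <= r <= n)%N by rewrite Hr1 rn.
have sr0 : 0 <= sig r by apply: Hsig0.
have lr0 : 0 <= lam r by apply: lam_ge0.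
have h1 : (lam r * N x) ^+ 2 <= N (Qs *m x) ^+ 2.
  rewrite exprMn !N_sq Qs_nsq nx mulr_sumr big_seq [X in _ <= X]big_seq.
  apply: ler_sum => i hi; rewrite dux //.
  case: (leqP i r) => hir.
    apply: ler_wpM2r; first exact: cn2_ge0.
    move: hi; rewrite mem_index_iota => /andP[i1 _].
    have := lam_anti i1 hir; move: lr0; nra.
  move: hi; rewrite mem_index_iota ltnS => /andP[_ irs].
  by rewrite hc0 ?hir // cn2_0 !mulr0.
have h2 : N ((Qs + H) *m x) ^+ 2 <= (sig r * N x) ^+ 2.
  rewrite exprMn !N_sq Q_mul nsq_on; [|exact: uI|exact: ov].
  apply: le_trans (_ : \sum_(i <- I n) sig r ^+ 2 * cn2 (dot (w i) x) <= _).
    rewrite big_seq [X in _ <= X]big_seq; apply: ler_sum => i hi.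
    rewrite cn2M cn2_real.
    case: (ltnP i r) => hir.
      move: hi; rewrite mem_index_iota => /andP[i1 _].
      rewrite hc; last by rewrite i1 /= -ltnS prednK.
      by rewrite cn2_0 !mulr0.
    apply: ler_wpM2r; first exact: cn2_ge0.
    move: hi; rewrite mem_index_iota ltnS => /andP[i1 irn].
    have := sig_anti Hr1 hir irn; have := Hsig0 (_ : (1 <= i <= n)%N).
    rewrite i1 irn => /(_ isT); nra.
  rewrite -mulr_sumr; apply: ler_wpM2l; first exact: sqr_ge0.
  apply: bessel; [exact: uI|exact: ow].
have g1 : lam r * N x <= N (Qs *m x) by apply: sq_le => //; apply: N_ge0.
have g2 : N ((Qs + H) *m x) <= sig r * N x.
  apply: sq_le => //; apply: mulr_ge0 => //; apply: N_ge0.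
have g3 : N (Qs *m x) <= N ((Qs + H) *m x) + h * N x.
  have -> : Qs *m x = (Qs + H) *m x - H *m x by rewrite mulmxDl addrK.
  apply: le_trans (NB _ _) _; apply: lerD => //; exact: specN.
have Nxp : 0 < N x by rewrite /N sqrtr_gt0.
have : lam r * N x <= (sig r + h) * N x by move: g1 g2 g3; lra.
rewrite ler_pM2r //; lra.
Qed.

Lemma weyl_up : (r < n)%N -> sig r.+1 <= lam r.+1 + h.
Proof.
move=> hrn.
have hmK : (r < r.+1)%N by [].
have [c [[k hk ck] [hc0 hc]]] := kern2 w u hmK hrn.
set x := \sum_(k <- I n) c k *: w k in hc.
have dwx i : i \in I n -> dot (w i) x = c i.
  move=> hi; apply: dot_on => //; [exact: uI | exact: ow].
have nx : nsq x = \sum_(i <- I n) cn2 (c i) by rewrite nsq_on //; [exact: uI|exact: ow].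
have nxp : 0 < nsq x by rewrite nx; apply: (sum_pos (uI n) hk ck).
have s1 : 0 <= sig r.+1 by apply: Hsig0; rewrite /= hrn.
have l1 : 0 <= lam r.+1 by apply: lam_ge0.
have h1 : (sig r.+1 * N x) ^+ 2 <= N ((Qs + H) *m x) ^+ 2.
  rewrite exprMn !N_sq nx Q_mul nsq_on; [|exact: uI|exact: ov].
  rewrite mulr_sumr big_seq [X in _ <= X]big_seq.
  apply: ler_sum => i hi; rewrite cn2M cn2_real dwx //.
  case: (leqP i r.+1) => hir.
    apply: ler_wpM2r; first exact: cn2_ge0.
    move: hi; rewrite mem_index_iota => /andP[i1 _].
    have := sig_anti i1 hir hrn; move: s1; nra.
  move: hi; rewrite mem_index_iota ltnS => /andP[_ irs].
  by rewrite hc0 ?hir // cn2_0 !mulr0.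
have h2 : N (Qs *m x) ^+ 2 <= (lam r.+1 * N x) ^+ 2.
  rewrite exprMn !N_sq Qs_nsq.
  apply: le_trans (_ : \sum_(i <- I rs) lam r.+1 ^+ 2 * cn2 (dot (u i) x) <= _).
    rewrite big_seq [X in _ <= X]big_seq; apply: ler_sum => i hi.
    case: (leqP i r) => hir.
      move: hi; rewrite mem_index_iota => /andP[i1 _].
      by rewrite hc ?i1 // cn2_0 !mulr0.
    apply: ler_wpM2r; first exact: cn2_ge0.
    move: hi; rewrite mem_index_iota => /andP[i1 _].
    have := lam_anti (isT : (1 <= r.+1)%N) hir; have := lam_ge0 i1; move: l1; nra.
  rewrite -mulr_sumr; apply: ler_wpM2l; first exact: sqr_ge0.
  apply: bessel; [exact: uI|exact: ou].
have g1 : sig r.+1 * N x <= N ((Qs + H) *m x) by apply: sq_le => //; apply: N_ge0.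
have g2 : N (Qs *m x) <= lam r.+1 * N x.
  apply: sq_le => //; apply: mulr_ge0 => //; apply: N_ge0.
have g3 : N ((Qs + H) *m x) <= N (Qs *m x) + h * N x.
  rewrite mulmxDl; apply: le_trans (ND _ _) _; apply: lerD => //; exact: specN.
have Nxp : 0 < N x by rewrite /N sqrtr_gt0.
have : sig r.+1 * N x <= (lam r.+1 + h) * N x by move: g1 g2 g3; lra.
rewrite ler_pM2r //.
Qed.

Definition T1 z := \sum_(i <- I r) ((sig i)%:C%C * dot (d i) z) *: v i.
Definition T2 z := \sum_(i <- index_iota r.+1 n.+1) ((sig i)%:C%C * dot (w i) z) *: v i.

Lemma decomp Qr z : Qr = \sum_(1 <= i < r.+1) ((sig i)%:C)%C *: (v i *m adj (v i)) ->
  (Qs + H) *m z - Qr *m z = T1 z + T2 z.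
Proof.
move=> ->; rewrite Q_mul mulmx_suml.
rewrite (big_cat_nat _ (n := r.+1)) //=; last by rewrite ltnS rn.
rewrite /T1 /T2 addrAC; congr (_ + _).
rewrite -sumrB; apply: eq_bigr => i _.
rewrite -scalemxAl rank1E scalerA -scalerBl; congr (_ *: _).
by rewrite /d dotBl mulrBr.
Qed.

Lemma T1_dot z : dot z (T1 z) = dot (q (fun i => (sig i)%:C%C * dot (v i) z)) z.
Proof.
rewrite /T1 /q dot_sumr dot_suml; apply: eq_bigr => i _.
rewrite dotZr dotZl cjM conj_real (dotC (v i) z); ring.
Qed.

Lemma qSg (y : nat -> C) : q (fun i => (sig i)%:C%C * y i) = Ey y - Qs *m q y.
Proof.
rewrite /q /Ey mulmx_sumr -sumrB big_seq [RHS]big_seq; apply: eq_bigr => i hi.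
rewrite -scalemxAr Qs_d ?Ir_n //.
set D := d i; set E := e i.
apply/matrixP => a b; rewrite !mxE; ring.
Qed.

Lemma delta_le : delta lam r <= lam r.
Proof.
rewrite /delta; elim: (iota 1 (r - 1)) => //= a s IH.
by rewrite ge_min IH orbT.
Qed.

Lemma Ny_le z : Ny (fun i => dot (v i) z) <= N z.
Proof. apply: ler_wsqrtr; apply: bessel; [exact: uI|exact: ovr]. Qed.

Lemma T2_N z : N (T2 z) <= (lam r.+1 + h) * N z.
Proof.
have l1 : 0 <= lam r.+1 by apply: lam_ge0.
have h0 := h_ge0.
have [hrn|hrn] := ltnP r n; last first.
  have e0 : (n.+1 - r.+1 = 0)%N by apply/eqP; rewrite subSS subn_eq0.
  rewrite /T2 /index_iota e0 big_nil N0; apply: mulr_ge0; [lra | exact: N_ge0].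
have sub : {subset index_iota r.+1 n.+1 <= I n}.
  move=> i; rewrite !mem_index_iota => /andP[h1 ->]; by rewrite andbT (leq_trans _ h1).
have us : uniq (index_iota r.+1 n.+1) by apply: iota_uniq.
have s1 : 0 <= sig r.+1 by apply: Hsig0; rewrite /= hrn.
have wu := weyl_up hrn.
apply: le_trans (_ : sig r.+1 * N z <= _); last first.
  by apply: ler_wpM2r; [exact: N_ge0 | lra].
apply: sq_le; first by apply: mulr_ge0 => //; exact: N_ge0.
rewrite exprMn !N_sq /T2 nsq_on //; last by apply: ortho_sub ov sub.
apply: le_trans (_ : \sum_(i <- index_iota r.+1 n.+1) sig r.+1 ^+ 2 * cn2 (dot (w i) z) <= _).
  rewrite big_seq [X in _ <= X]big_seq; apply: ler_sum => i hi.
  rewrite cn2M cn2_real; apply: ler_wpM2r; first exact: cn2_ge0.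
  move: hi; rewrite mem_index_iota ltnS => /andP[h1 h2].
  have := sig_anti (isT : (1 <= r.+1)%N) h1 h2.
  have := Hsig0 (_ : (1 <= i <= n)%N); rewrite h2 (leq_trans _ h1) // => /(_ isT).
  nra.
rewrite -mulr_sumr; apply: ler_wpM2l; first exact: sqr_ge0.
apply: bessel => //; by apply: ortho_sub ow sub.
Qed.

Lemma sr_pos : h <= delta lam r / 2 -> lam r / 2 <= sig r.
Proof.
move=> Hh; have := weyl_low; have := delta_le; move: Hh; lra.
Qed.

Lemma main_bound Qr z : Qr = \sum_(1 <= i < r.+1) ((sig i)%:C)%C *: (v i *m adj (v i)) ->
  h <= delta lam r / 2 ->
  `|complex.Re (dot z (Qs *m z)) - complex.Re (dot z (Qr *m z))|
    <= nsq z * (lam r.+1 + 4 * h + 2 * lam 1 * h / sig r).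
Proof.
move=> HQr Hh.
have lr : 0 < lam r by apply: Hlpos; rewrite Hr1 Hrrs.
have sr : 0 < sig r by have := sr_pos Hh; lra.
have h0 := h_ge0.
have l1 : 0 <= lam 1 by apply: lam_ge0.
have e : Qs *m z = ((Qs + H) *m z - Qr *m z) + Qr *m z - H *m z.
  by rewrite subrK mulmxDl addrK.
rewrite e decomp // !dotBr !dotDr !ReB !ReD.
set c := fun i => dot (v i) z.
have b1 : `|complex.Re (dot z (T1 z))| <= N z * ((2 * h + lam 1 * (2 * h / sig r)) * N z).
  rewrite T1_dot; apply: le_trans (CSabs _ _) _; rewrite mulrC.
  apply: ler_wpM2l; first exact: N_ge0.
  rewrite qSg; apply: le_trans (NB _ _) _.
  have hc := Ny_le z; rewrite -/c in hc.
  have hE := E_N c; have hQ := Qs_N (q c); have hs := sylv c sr.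
  have := Ny_ge0 c; move=> c0.
  have : lam 1 * N (q c) <= lam 1 * (2 * h / sig r * Ny c) by apply: ler_wpM2l.
  have : 0 <= 2 * h / sig r by apply: divr_ge0; [lra | exact: ltW].
  move=> k0 hl.
  have : (2 * h + lam 1 * (2 * h / sig r)) * Ny c <= (2 * h + lam 1 * (2 * h / sig r)) * N z.
    apply: ler_wpM2l => //; apply: addr_ge0; [lra | exact: mulr_ge0].
  move: hE hQ hl; nra.
have b2 : `|complex.Re (dot z (T2 z))| <= N z * ((lam r.+1 + h) * N z).
  apply: le_trans (CSabs _ _) _; apply: ler_wpM2l; [exact: N_ge0 | exact: T2_N].
have b3 : `|complex.Re (dot z (H *m z))| <= N z * (h * N z).
  apply: le_trans (CSabs _ _) _; apply: ler_wpM2l; [exact: N_ge0 | exact: specN].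
have nz : N z * N z = nsq z by rewrite -expr2 N_sq.
set A := complex.Re (dot z (T1 z)) in b1 *.
set B := complex.Re (dot z (T2 z)) in b2 *.
set D := complex.Re (dot z (H *m z)) in b3 *.
set Rq := complex.Re (dot z (Qr *m z)).
have -> : A + B + Rq - D - Rq = A + B - D by ring.
apply: le_trans (ler_normB _ _) _.
apply: le_trans (lerD (ler_normD _ _) (lexx _)) _.
have -> : nsq z * (lam r.+1 + 4 * h + 2 * lam 1 * h / sig r)
  = N z * ((2 * h + lam 1 * (2 * h / sig r)) * N z) + N z * ((lam r.+1 + h) * N z)
    + N z * (h * N z).
  rewrite -nz; field; by rewrite lt0r_neq0.
by apply: lerD => //; apply: lerD.
Qed.
End Main.

End Aux.
Import Aux.

Lemma cn2_AK {R : realType} {K} {c : R[i]} : A_K K c -> cn2 c = 1.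
Proof. case=> kk _ <-; by rewrite /expi /cn2 /= cos2Dsin2. Qed.

Lemma nsq_AK {R : realType} {n K} {z : 'cV[R[i]]_n} : inAKn K z -> nsq z = n%:R.
Proof.
move=> hz; rewrite nsqE.
under eq_bigr => k _ do rewrite (cn2_AK (hz k)).
by rewrite sumr_const card_ord.
Qed.

Theorem theorem3 : exists c : nat, forall (R : realType) (n K r rs : nat)
  (Qs H Qr : 'M[R[i]]_n) (lam : nat -> R) (u : nat -> 'cV[R[i]]_n)
  (sig : nat -> R) (v w : nat -> 'cV[R[i]]_n) (OPT : R) (zr : 'cV[R[i]]_n),
  (2 <= K)%N ->
  (rs <= n)%N ->
  (forall j, (1 <= j <= rs)%N -> 0 < lam j) ->
  (forall j, (rs < j)%N -> lam j = 0) ->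
  (forall j, (1 <= j)%N -> lam j.+1 <= lam j) ->
  (forall i j, (1 <= i <= rs)%N -> (1 <= j <= rs)%N ->
     adj (u i) *m u j = (i == j)%:R%:M) ->
  Qs = \sum_(1 <= i < rs.+1) ((lam i)%:C)%C *: (u i *m adj (u i)) ->
  (forall i j, (1 <= i <= n)%N -> (1 <= j <= n)%N ->
     adj (v i) *m v j = (i == j)%:R%:M) ->
  (forall i j, (1 <= i <= n)%N -> (1 <= j <= n)%N ->
     adj (w i) *m w j = (i == j)%:R%:M) ->
  (forall j, (1 <= j <= n)%N -> 0 <= sig j) ->
  (forall j, (1 <= j)%N -> (j < n)%N -> sig j.+1 <= sig j) ->
  Qs + H = \sum_(1 <= i < n.+1) ((sig i)%:C)%C *: (v i *m adj (w i)) ->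
  Qr = \sum_(1 <= i < r.+1) ((sig i)%:C)%C *: (v i *m adj (v i)) ->
  (1 <= r)%N -> (r <= rs)%N ->
  specnorm H <= delta lam r / 2 ->
  (exists z, inAKn K z /\ complex.Re (qform Qs z) = OPT) ->
  (forall z, inAKn K z -> complex.Re (qform Qs z) <= OPT) ->
  inAKn K zr ->
  (forall z, inAKn K z -> complex.Re (qform Qr z) <= complex.Re (qform Qr zr)) ->
  `|OPT - complex.Re (qform Qs zr)|
    <= c%:R * (n%:R * (lam r.+1 + lam 1%N / delta lam r * specnorm H)).
Proof.
exists 16%N => R n K r rs Qs H Qr lam u sig v w OPT zr HK Hrs Hlpos Hl0 Hlmono Hu HQs
  Hv Hw Hsig0 Hsigmono HQ HQr Hr1 Hrrs Hh [zs [zsA zsE]] Hopt zrA Hzr.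
have mb z := main_bound Hrs Hlpos Hl0 Hlmono Hu HQs Hv Hw Hsig0 Hsigmono HQ Hr1 Hrrs z HQr Hh.
have sp := sr_pos Hrs Hlpos Hl0 Hlmono Hu HQs Hv Hw Hsig0 Hsigmono HQ Hr1 Hrrs Hh.
have h0 := h_ge0 H Hrs Hr1 Hrrs.
have dl := delta_le r lam.
have lr : 0 < lam r by apply: Hlpos; rewrite Hr1 Hrrs.
have lr1 : 0 <= lam r.+1.
  case: (ltnP rs r.+1) => hh; first by rewrite Hl0.
  by apply: ltW; apply: Hlpos; rewrite hh.
have l1r : lam r <= lam 1%N.
  elim: r Hr1 {mb sp dl lr lr1 Hrrs HQr Hh Hzr} => // m IH.
  case: m IH => [|m] IH _ //; apply: le_trans (Hlmono _ _) (IH _) => //.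
set h := specnorm H in mb sp Hh h0 *.
set B := lam r.+1 + 4 * h + 2 * lam 1%N * h / sig r in mb.
have bs := mb zs; have bz := mb zr.
rewrite (nsq_AK zsA) in bs; rewrite (nsq_AK zrA) in bz.
rewrite -!qformE in bs bz.
have o1 := Hopt zr zrA; have o2 := Hzr zs zsA.
have n0 : 0 <= n%:R :> R by apply: ler0n.
have key : `|OPT - complex.Re (qform Qs zr)| <= 2 * (n%:R * B).
  rewrite ger0_norm; last by move: o1; lra.
  move: bs bz o1 o2; rewrite -zsE !ler_norml => /andP[a1 a2] /andP[b1 b2]; lra.
apply: le_trans key _.
have sr : 0 < sig r by lra.
have hB : B <= 8 * (lam r.+1 + lam 1%N / delta lam r * h).
  have [d0|dp] := eqVneq (delta lam r) 0.
    have h00 : h = 0 by apply/eqP; rewrite eq_le h0 andbT; move: Hh; rewrite d0; lra.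
    rewrite /B h00 !(mulr0, mul0r, addr0); move: lr1; lra.
  have dpos : 0 < delta lam r by rewrite lt_def dp; lra.
  have t1 : h <= lam 1%N / delta lam r * h.
    rewrite -{1}(mul1r h); apply: ler_wpM2r => //.
    by rewrite ler_pdivlMr // mul1r; lra.
  have t2 : 2 * lam 1%N * h / sig r <= 4 * (lam 1%N / delta lam r * h).
    have inv : (sig r)^-1 <= 2 / delta lam r.
      have : 0 <= 2 / delta lam r - (sig r)^-1.
        have -> : 2 / delta lam r - (sig r)^-1 = (2 * sig r - delta lam r) / (delta lam r * sig r).
          by field; rewrite (lt0r_neq0 sr) (lt0r_neq0 dpos).
        apply: divr_ge0; first lra.
        by apply: mulr_ge0; apply: ltW.
      lra.
    have : 2 * lam 1%N * h * (sig r)^-1 <= 2 * lam 1%N * h * (2 / delta lam r).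
      apply: ler_wpM2l => //; apply: mulr_ge0 => //; lra.
    have -> : 4 * (lam 1%N / delta lam r * h) = 2 * lam 1%N * h * (2 / delta lam r) by ring.
    by [].
  rewrite /B; lra.
have -> : (16%:R : R) = 2 * 8 by rewrite -natrM.
rewrite -mulrA; apply: ler_wpM2l => //.
rewrite mulrCA; apply: ler_wpM2l => //.
Qed.
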